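(* Consider an $(M,K)$ product broadcast channel with one sender, $K$ intended receivers and one eavesdropper. For $j=1,\dots,M$ let $\mathcal{P}_j$ be the set of all conditional distributions $p'(y_{1j},\dots,y_{Kj},y_{ej}\mid x_j)$ whose conditional marginals $p'(y_{ij}\mid x_j)$ ($i=1,\dots,K$) and $p'(y_{ej}\mid x_j)$ coincide with those of the true channel $j$, and let $\mathcal{P}=\mathcal{P}_1\times\cdots\times\mathcal{P}_M$. Then the common-message-secrecy-capacity $C$ satisfies $$C\le \min_{\mathcal{P}}\ \max_{\prod_{j=1}^M p(x_j)}\ \min_{i\in\{1,\dots,K\}}\ \sum_{j=1}^M I(X_j;Y_{ij}\mid Y_{ej}),$$ where the outer minimum is over $(p'_1,\dots,p'_M)\in\mathcal{P}$, the maximum is over product input distributions, and each mutual information is evaluated under the joint distribution $p(x_j)\,p'_j(y_{1j},\dots,y_{Kj},y_{ej}\mid x_j)$.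
   Context: An $(M,K)$ product broadcast channel: one sender, $K$ intended receivers, one eavesdropper (index $e$), and $M$ parallel channels with finite input alphabet $\mathcal{X}$ and finite output alphabet $\mathcal{Y}$, memoryless and mutually independent: $\Pr(\{y_{1j}^n,\dots,y_{Kj}^n,y_{ej}^n\}_{j=1}^M\mid\{x_j^n\}_{j=1}^M)=\prod_{j=1}^M\prod_{t=1}^n \Pr(y_{1j}(t),\dots,y_{Kj}(t),y_{ej}(t)\mid x_j(t))$. Here $x_j^n$ is the input sequence on channel $j$ and $y_{ij}^n$ the output of receiver $i$ (or eavesdropper $i=e$) on channel $j$. An $(n,2^{nR})$ code consists of a message set $\{1,\dots,2^{nR}\}$, a possibly stochastic encoder mapping a message $W$ to $(x_1^n,\dots,x_M^n)\in(\mathcal{X}^n)^M$, and decoders $\Phi_{i,n}:(\mathcal{Y}^n)^M\to\{1,\dots,2^{nR}\}$ producing $\hat W_i$ from $(y_{i1}^n,\dots,y_{iM}^n)$, $i=1,\dots,K$. A rate $R$ is an achievable common-message-secrecy-rate if for every $\varepsilon>0$ there is a length-$n$ code with $\Pr(W\neq\hat W_i)\le\varepsilon$ for all $i$ and $\frac1n H(W\mid Y_{e1}^n,\dots,Y_{eM}^n)\ge R-\varepsilon$. The common-message-secrecy-capacity is the supremum of achievable rates. *)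

(* Defs.v *)
From HB Require Import structures.
From mathcomp Require Import all_boot all_order all_algebra.
From mathcomp Require Import all_classical all_reals.
From mathcomp Require Import all_analysis.
Set Implicit Arguments. Unset Strict Implicit. Unset Printing Implicit Defensive.
Import Order.TTheory GRing.Theory Num.Theory.
Local Open Scope ring_scope.

Section InfoTheory.
Variable R : realType.

Definition log2 (x : R) : R := ln x / ln 2.

Definition is_pmf (T : finType) (p : T -> R) : Prop :=
  (forall t, 0 <= p t) /\ \sum_(t : T) p t = 1.

Definition entropy (T : finType) (p : T -> R) : R :=
  - \sum_(t : T) (if 0 < p t then p t * log2 (p t) else 0).

(** conditional mutual information I(X;Y|Z) = H(X|Z) - H(X|Y,Z)
    = H(X,Z) + H(Y,Z) - H(X,Y,Z) - H(Z)
    for a joint pmf q on X * Y * Z *)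
Definition condMI (X Y Z : finType) (q : X * Y * Z -> R) : R :=
  let qXZ := fun xz : X * Z => \sum_(y : Y) q (xz.1, y, xz.2) in
  let qYZ := fun yz : Y * Z => \sum_(x : X) q (x, yz.1, yz.2) in
  let qZ  := fun z : Z => \sum_(x : X) \sum_(y : Y) q (x, y, z) in
  entropy qXZ + entropy qYZ - entropy q - entropy qZ.

Definition condEntropy (A B : finType) (q : A * B -> R) : R :=
  entropy q - entropy (fun b : B => \sum_(a : A) q (a, b)).

(** Output of one channel use on sub-channel j: a vector indexed by
    [option 'I_K]; [Some i] is receiver i (0-based), [None] is the
    eavesdropper e. *)
Definition outv (K : nat) (Y : finType) := {ffun option 'I_K -> Y}.

Definition is_channel (M K : nat) (X Y : finType)
  (W : 'I_M -> X -> outv K Y -> R) : Prop :=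
  forall j x, is_pmf (W j x).

Definition cmarg (K : nat) (X Y : finType) (V : X -> outv K Y -> R)
  (k : option 'I_K) (x : X) (b : Y) : R :=
  \sum_(y : outv K Y | y k == b) V x y.

Definition same_marginals (M K : nat) (X Y : finType)
  (W P' : 'I_M -> X -> outv K Y -> R) : Prop :=
  is_channel P' /\
  forall j k x b, cmarg (P' j) k x b = cmarg (W j) k x b.

Definition inblock (M n : nat) (X : finType) := {ffun 'I_M -> {ffun 'I_n -> X}}.
Definition outblock (M n K : nat) (Y : finType) :=
  {ffun 'I_M -> {ffun 'I_n -> outv K Y}}.
Definition obsblock (M n : nat) (Y : finType) := {ffun 'I_M -> {ffun 'I_n -> Y}}.

Definition observe (M n K : nat) (Y : finType) (k : option 'I_K)
  (y : outblock M n K Y) : obsblock M n Y :=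
  [ffun j => [ffun t => y j t k]].

Definition chan_n (M n K : nat) (X Y : finType) (W : 'I_M -> X -> outv K Y -> R)
  (x : inblock M n X) (y : outblock M n K Y) : R :=
  \prod_(j < M) \prod_(t < n) W j (x j t) (y j t).

(** number of messages of an (n, 2^{nR}) code: ceil(2^{nR}) *)
Definition msg_count (n : nat) (Rt : R) : nat :=
  `|Num.ceil (expR (n%:R * Rt * ln 2))|%N.

(** joint pmf of (W, X-block, Y-block) with W uniform on N messages,
    stochastic encoder enc w x = Pr(x | w) *)
Definition joint (M n K N : nat) (X Y : finType) (W : 'I_M -> X -> outv K Y -> R)
  (enc : 'I_N -> inblock M n X -> R) (w : 'I_N) (x : inblock M n X)
  (y : outblock M n K Y) : R :=
  N%:R^-1 * enc w x * chan_n W x y.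

Definition err_prob (M n K N : nat) (X Y : finType) (W : 'I_M -> X -> outv K Y -> R)
  (enc : 'I_N -> inblock M n X -> R) (dec : obsblock M n Y -> 'I_N) (i : 'I_K) : R :=
  \sum_(w : 'I_N) \sum_(x : inblock M n X) \sum_(y : outblock M n K Y |
        dec (observe (Some i) y) != w) joint W enc w x y.

Definition equivocation (M n K N : nat) (X Y : finType)
  (W : 'I_M -> X -> outv K Y -> R) (enc : 'I_N -> inblock M n X -> R) : R :=
  condEntropy (fun wz : 'I_N * obsblock M n Y =>
    \sum_(x : inblock M n X) \sum_(y : outblock M n K Y | observe None y == wz.2)
      joint W enc wz.1 x y).

Definition achievable (M K : nat) (X Y : finType)
  (W : 'I_M -> X -> outv K Y -> R) (Rt : R) : Prop :=
  forall eps : R, 0 < eps ->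
  exists n : nat, (0 < n)%N /\
  exists (enc : 'I_(msg_count n Rt) -> inblock M n X -> R)
         (dec : 'I_K -> obsblock M n Y -> 'I_(msg_count n Rt)),
    (forall w, is_pmf (enc w)) /\
    (forall i, err_prob W enc (dec i) i <= eps) /\
    n%:R^-1 * equivocation W enc >= Rt - eps.

Definition secrecy_capacity (M K : nat) (X Y : finType)
  (W : 'I_M -> X -> outv K Y -> R) : \bar R :=
  ereal_sup [set (Rt%:E)%E | Rt in [set Rt | achievable W Rt]].

Definition joint_j (K : nat) (X Y : finType) (p : X -> R) (V : X -> outv K Y -> R)
  (i : 'I_K) (xab : X * Y * Y) : R :=
  p xab.1.1 * \sum_(y : outv K Y | (y (Some i) == xab.1.2) && (y None == xab.2))
                V xab.1.1 y.

Definition bound_value (M K : nat) (X Y : finType) (P' : 'I_M -> X -> outv K Y -> R)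
  (p : 'I_M -> X -> R) : \bar R :=
  \big[Order.min/+oo%E]_(i < K) (\sum_(j < M) condMI (joint_j (p j) (P' j) i))%:E.

End InfoTheory.

(* Main.v *)
Require Import Defs.
From HB Require Import structures.
From mathcomp Require Import all_boot all_order all_algebra.
From mathcomp Require Import all_classical all_reals.
From mathcomp Require Import all_analysis.
From mathcomp Require Import ring lra.
Import Order.TTheory GRing.Theory Num.Theory.
Local Open Scope ring_scope.
Local Open Scope classical_set_scope.
Set Implicit Arguments. Unset Strict Implicit. Unset Printing Implicit Defensive.
Section Gen.
Variable R : realType.

Definition push (T U : finType) (Q : T -> R) (f : T -> U) (u : U) : R :=
  \sum_(t | f t == u) Q t.

Definition Hn (T : finType) (p : T -> R) : R := - \sum_t p t * ln (p t).

Lemma entropyE (T : finType) (p : T -> R) :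
  (forall t, 0 <= p t) -> entropy p = Hn p / ln 2.
Proof.
move=> p0; rewrite /entropy /Hn mulNr mulr_suml; congr (- _).
apply: eq_bigr => t _; case: ifPn => pt; first by rewrite /log2 mulrA.
have -> : p t = 0 by apply/eqP; rewrite eq_le p0 andbT leNgt.
by rewrite !mul0r.
Qed.

Lemma push_ge0 (T U : finType) (Q : T -> R) (f : T -> U) u :
  (forall t, 0 <= Q t) -> 0 <= push Q f u.
Proof. by move=> Q0; apply: sumr_ge0. Qed.

Lemma push_ge (T U : finType) (Q : T -> R) (f : T -> U) t :
  (forall t, 0 <= Q t) -> Q t <= push Q f (f t).
Proof.
move=> Q0; rewrite /push (bigD1 t) //= lerDl; exact: sumr_ge0.
Qed.

Lemma push_gt0 (T U : finType) (Q : T -> R) (f : T -> U) t :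
  (forall t, 0 <= Q t) -> 0 < Q t -> 0 < push Q f (f t).
Proof. by move=> Q0 Qt; apply: lt_le_trans Qt (push_ge _ _ Q0). Qed.

Lemma sum_push (T U : finType) (Q : T -> R) (f : T -> U) (g : U -> R) :
  \sum_t Q t * g (f t) = \sum_u push Q f u * g u.
Proof.
rewrite (partition_big f predT) //=; apply: eq_bigr => u _.
rewrite /push mulr_suml; apply: eq_bigr => t /eqP <-; done.
Qed.

Lemma push_sum (T U : finType) (Q : T -> R) (f : T -> U) :
  \sum_u push Q f u = \sum_t Q t.
Proof.
have := sum_push Q f (fun _ => 1); rewrite (eq_bigr (fun t => Q t)); last by move=> *; rewrite mulr1.
by move=> ->; apply: eq_bigr => *; rewrite mulr1.
Qed.

Lemma Hn_push (T U : finType) (Q : T -> R) (f : T -> U) :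
  Hn (push Q f) = - \sum_t Q t * ln (push Q f (f t)).
Proof. by rewrite /Hn (sum_push Q f (fun u => ln (push Q f u))). Qed.

Lemma push_eqf (T U V : finType) (Q : T -> R) (f : T -> U) (g : T -> V) t :
  (forall t t', (f t == f t') = (g t == g t')) -> push Q f (f t) = push Q g (g t).
Proof. by move=> fg; apply: eq_bigl => t'; rewrite fg. Qed.

Lemma Hn_eq (T U V : finType) (Q : T -> R) (f : T -> U) (g : T -> V) :
  (forall t t', (f t == f t') = (g t == g t')) -> Hn (push Q f) = Hn (push Q g).
Proof.
by move=> fg; rewrite !Hn_push; congr (- _); apply: eq_bigr => t _; rewrite (push_eqf Q t fg).
Qed.

Lemma eq_supp (T : finType) (Q F G : T -> R) :
  (forall t, 0 < Q t -> F t = G t) -> (forall t, 0 <= Q t) ->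
  \sum_t Q t * F t = \sum_t Q t * G t.
Proof.
move=> FG Q0; apply: eq_bigr => t _.
have [Qt|] := ltP 0 (Q t); first by rewrite FG.
move=> Qt; have -> : Q t = 0 by apply/eqP; rewrite eq_le Qt Q0.
by rewrite !mul0r.
Qed.

Lemma le_supp (T : finType) (Q F G : T -> R) :
  (forall t, 0 < Q t -> F t <= G t) -> (forall t, 0 <= Q t) ->
  \sum_t Q t * F t <= \sum_t Q t * G t.
Proof.
move=> FG Q0; apply: ler_sum => t _.
have [Qt|] := ltP 0 (Q t); first by rewrite ler_pM2l //; apply: FG.
move=> Qt; have -> : Q t = 0 by apply/eqP; rewrite eq_le Qt Q0.
by rewrite !mul0r.
Qed.

Lemma gibbs (T : finType) (Q b : T -> R) :
  (forall t, 0 <= Q t) -> \sum_t Q t = 1 ->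
  (forall t, 0 <= b t) -> \sum_t b t <= 1 ->
  (forall t, 0 < Q t -> 0 < b t) ->
  \sum_t Q t * ln (b t) <= \sum_t Q t * ln (Q t).
Proof.
move=> Q0 Q1 b0 b1 Qb; rewrite -subr_le0 -sumrB.
suff : \sum_t (Q t * ln (b t) - Q t * ln (Q t)) <= \sum_t (b t - Q t).
  move=> h; rewrite (le_trans h) //.
  by rewrite sumrB Q1 subr_le0.
apply: ler_sum => t _.
have [Qt|] := ltP 0 (Q t); last first.
  move=> Qt; have -> : Q t = 0 by apply/eqP; rewrite eq_le Qt Q0.
  rewrite !mul0r subr0 subr0; exact: b0.
rewrite -mulrBr -ln_div ?posrE ?Qb //.
have h : ln (b t / Q t) <= b t / Q t - 1.
  have := @le_ln1Dx R (b t / Q t - 1); rewrite [1 + _]addrC subrK; apply.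
  by rewrite ltrBrDl subrr divr_gt0 ?Qb.
apply: (le_trans (_ : _ <= Q t * (b t / Q t - 1))); first by rewrite ler_pM2l.
by rewrite mulrBr mulr1 mulrC divfK // gt_eqF.
Qed.

End Gen.
Section Gen2.
Variable R : realType.

Lemma push_comp (T U V : finType) (Q : T -> R) (f : T -> U) (g : U -> V) w :
  push Q (fun t => g (f t)) w = \sum_(u | g u == w) push Q f u.
Proof.
rewrite /push (partition_big f (fun u => g u == w)); last by move=> t.
apply: eq_bigr => u gu; apply: eq_bigl => t.
by case: (eqVneq (f t) u) => [->|]; rewrite ?gu ?andbF ?andbT.
Qed.

Lemma push_marg2 (T U V : finType) (Q : T -> R) (A : T -> U) (B : T -> V) v :
  \sum_u push Q (fun t => (A t, B t)) (u, v) = push Q B v.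
Proof.
rewrite [RHS]/push (partition_big A predT) //=.
apply: eq_bigr => u _; apply: eq_bigl => t; rewrite xpair_eqE andbC //.
Qed.

Lemma push_pos_ex (T U : finType) (Q : T -> R) (f : T -> U) u :
  (forall t, 0 <= Q t) -> 0 < push Q f u -> exists t, f t = u /\ 0 < Q t.
Proof.
move=> Q0 Pu; case: (pickP (fun t => (f t == u) && (0 < Q t))) => [t /andP[/eqP ft Qt]|none].
  by exists t.
suff : push Q f u = 0 by move=> h; rewrite h ltxx in Pu.
apply: big1 => t ft; have := none t; rewrite ft /= => /negbT; rewrite -leNgt => h.
by apply/eqP; rewrite eq_le h Q0.
Qed.

Lemma cond_gibbs (T U V : finType) (Q : T -> R) (A : T -> U) (B : T -> V) (r : U -> V -> R) :
  (forall t, 0 <= Q t) -> \sum_t Q t = 1 ->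
  (forall u v, 0 <= r u v) -> (forall v, \sum_u r u v <= 1) ->
  (forall t, 0 < Q t -> 0 < r (A t) (B t)) ->
  Hn (push Q (fun t => (A t, B t))) - Hn (push Q B) <= - \sum_t Q t * ln (r (A t) (B t)).
Proof.
move=> Q0 Q1 r0 r1 Qr.
set f := fun t => (A t, B t).
set P := push Q f.
pose b (uv : U * V) := push Q B uv.2 * r uv.1 uv.2.
have P0 : forall uv, 0 <= P uv by move=> uv; apply: push_ge0.
have PB0 : forall v, 0 <= push Q B v by move=> v; apply: push_ge0.
have b0 : forall uv, 0 <= b uv by move=> uv; rewrite mulr_ge0.
have G := @gibbs R _ P b P0 _ b0 _ _.
have {G} G : \sum_uv P uv * ln (b uv) <= \sum_uv P uv * ln (P uv).
  apply: G.
  - by rewrite push_sum.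
  - rewrite -(pair_bigA _ (fun u v => b (u, v))) /= exchange_big /=.
    rewrite -Q1 -(push_sum Q B); apply: ler_sum => v _.
    rewrite /b /= -mulr_sumr; rewrite -[X in _ <= X]mulr1.
    by rewrite ler_wpM2l.
  - move=> [u v] /(push_pos_ex Q0) [t [ft Qt]].
    rewrite /b /=; apply: mulr_gt0.
      by case: ft => _ <-; apply: push_gt0.
    by case: ft => <- <-; apply: Qr.
rewrite -(sum_push Q f (fun uv => ln (b uv))) -(sum_push Q f (fun uv => ln (P uv))) in G.
rewrite Hn_push Hn_push -/f -/P.
have E : \sum_t Q t * ln (b (f t)) = \sum_t Q t * ln (push Q B (B t)) + \sum_t Q t * ln (r (A t) (B t)).
  rewrite -big_split /=; apply: eq_bigr => t _.
  have [Qt|] := ltP 0 (Q t).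
    by rewrite /b /= lnM ?posrE ?Qr // ?mulrDr //; apply: push_gt0.
  move=> Qt; have -> : Q t = 0 by apply/eqP; rewrite eq_le Qt Q0.
  by rewrite !mul0r addr0.
rewrite E in G; move: G; set a := \sum_t _ * ln (P _); set c := \sum_t _ * ln (push _ _ _).
set d := \sum_t _ * ln (r _ _).
move=> G; rewrite opprK; lra.
Qed.

End Gen2.
Section Gen3.
Variable R : realType.

Lemma divr_le1 (x : R) : 0 <= x -> x / x <= 1.
Proof. by move=> x0; have [->|x0'] := eqVneq x 0; rewrite ?mul0r ?mulfV. Qed.

Lemma cond_mono (T U V W : finType) (Q : T -> R) (A : T -> U) (B : T -> V) (C : T -> W) :
  (forall t, 0 <= Q t) -> \sum_t Q t = 1 ->
  Hn (push Q (fun t => (A t, (B t, C t)))) - Hn (push Q (fun t => (B t, C t)))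
  <= Hn (push Q (fun t => (A t, B t))) - Hn (push Q B).
Proof.
move=> Q0 Q1.
pose r u (vw : V * W) := push Q (fun t => (A t, B t)) (u, vw.1) / push Q B vw.1.
have := cond_gibbs (A:=A) (B:=fun t => (B t, C t)) (r:=r) Q0 Q1.
have h : - \sum_t Q t * ln (r (A t) (B t, C t)) =
         Hn (push Q (fun t => (A t, B t))) - Hn (push Q B).
  rewrite !Hn_push.
  suff -> : \sum_t Q t * ln (r (A t) (B t, C t)) =
     \sum_t Q t * ln (push Q (fun t => (A t, B t)) (A t, B t)) - \sum_t Q t * ln (push Q B (B t)) by lra.
  rewrite -sumrB; under [X in _ = X]eq_bigr do rewrite -mulrBr.
  apply: eq_supp => // t Qt.
  rewrite /r /= ln_div ?posrE //.
  - exact: (@push_gt0 R T _ Q (fun t => (A t, B t)) t Q0 Qt).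
  - exact: push_gt0.
rewrite h; apply.
- by move=> u vw; rewrite /r divr_ge0 // push_ge0.
- move=> [v w]; rewrite /r /= -mulr_suml push_marg2; apply: divr_le1; exact: push_ge0.
- move=> t Qt; rewrite /r /= divr_gt0 //.
  + exact: (@push_gt0 R T _ Q (fun t => (A t, B t)) t Q0 Qt).
  + exact: push_gt0.
Qed.

Lemma fano (T U : finType) (N : nat) (Q : T -> R) (Wv : T -> 'I_N) (Yv : T -> U)
  (dec : U -> 'I_N) (th : R) :
  (forall t, 0 <= Q t) -> \sum_t Q t = 1 -> 0 < th < 1 ->
  Hn (push Q (fun t => (Wv t, Yv t))) - Hn (push Q Yv)
  <= - ln (1 - th) + \sum_t Q t * (dec (Yv t) != Wv t)%:R * ln (N%:R / th).
Proof.
move=> Q0 Q1 /andP[th0 th1].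
have [t0 _] : exists t : T, true.
  case: (pickP (fun t : T => true)) => [t _|none]; first by exists t.
  by move: Q1; rewrite big_pred0 // => /esym/eqP; rewrite oner_eq0.
have N0 : (0 < N)%N by case: (Wv t0) => m h; exact: (leq_ltn_trans (leq0n m) h).
have Nr0 : 0 < N%:R :> R by rewrite ltr0n.
pose r (w : 'I_N) (y : U) := if dec y == w then 1 - th else th / N%:R.
have r0 : forall w y, 0 < r w y.
  by move=> w y; rewrite /r; case: ifP => _; [rewrite subr_gt0 | rewrite divr_gt0].
apply: le_trans (cond_gibbs (A := Wv) (B := Yv) (r := r) Q0 Q1 _ _ _) _.
- by move=> w y; apply: ltW.
- move=> y.
  apply: (le_trans (y := \sum_w ((if dec y == w then 1 - th else 0) + th / N%:R))).
    apply: ler_sum => w _; rewrite /r; case: ifP => _; last by rewrite add0r.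
    by rewrite lerDl divr_ge0 // ltW.
  rewrite big_split /= -big_mkcond /= (eq_bigl (fun w => w == dec y)); last by move=> w; rewrite eq_sym.
  rewrite big_pred1_eq sumr_const card_ord.
  have -> : th / N%:R *+ N = th by rewrite -mulr_natr divfK ?gt_eqF.
  by rewrite subrK.
- by move=> t _; apply: r0.
rewrite -sumrN.
apply: (le_trans (y := \sum_t Q t * (- ln (1 - th) + (dec (Yv t) != Wv t)%:R * ln (N%:R / th)))).
  apply: ler_sum => t _; rewrite -mulrN; apply: ler_wpM2l => //.
  rewrite /r; case: (eqVneq (dec (Yv t)) (Wv t)) => [_|ne]; first by rewrite mul0r addr0.
  rewrite mul1r -[X in X <= _]add0r lerD //.
    by rewrite oppr_ge0 ln_le0 // gerBl ltW.
  by rewrite -lnV ?posrE ?divr_gt0 // invf_div.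
under eq_bigr do rewrite mulrDr.
rewrite big_split /= -mulr_suml Q1 mul1r lerD //.
by apply: ler_sum => t _; rewrite mulrA.
Qed.
End Gen3.
Section Gen4.
Variable R : realType.

Lemma sum_ffun_prod (I J : finType) (F : I -> J -> R) (P : I -> pred J) :
  \sum_(f : {ffun I -> J} | [forall i, P i (f i)]) \prod_i F i (f i)
  = \prod_i \sum_(j | P i j) F i j.
Proof.
under [RHS]eq_bigr do rewrite big_mkcond.
rewrite bigA_distr_bigA /= [LHS]big_mkcond; apply: eq_bigr => f _.
case: forallP => h.
  by apply: eq_bigr => i _; rewrite h.
have [i Pi] : exists i, ~~ P i (f i).
  apply/existsP; rewrite -negb_forall; apply/negP => /forallP; exact: h.
by rewrite (bigD1 i) //= (negbTE Pi) mul0r.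
Qed.

Lemma sum_ffun2_prod (I1 I2 J : finType) (F : I1 -> I2 -> J -> R) (P : I1 -> I2 -> pred J) :
  \sum_(f : {ffun I1 -> {ffun I2 -> J}} | [forall i, [forall k, P i k (f i k)]])
     \prod_i \prod_k F i k (f i k)
  = \prod_i \prod_k \sum_(j | P i k j) F i k j.
Proof.
rewrite (sum_ffun_prod (fun i (g : {ffun I2 -> J}) => \prod_k F i k (g k))
          (fun i (g : {ffun I2 -> J}) => [forall k, P i k (g k)])).
by apply: eq_bigr => i _; rewrite sum_ffun_prod.
Qed.

Lemma ln_prod (I : finType) (F : I -> R) :
  (forall i, 0 < F i) -> ln (\prod_i F i) = \sum_i ln (F i).
Proof.
move=> F0.
pose K := fun a b : R => 0 < a /\ ln a = b.
suff : K (\prod_i F i) (\sum_i ln (F i)) by case.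
apply: (big_rec2 K); first by split; [exact: ltr01|exact: ln1].
move=> i a b _ [a0 <-]; split; first by rewrite mulr_gt0.
by rewrite lnM ?posrE.
Qed.

Lemma prod_gt0_each (I : finType) (F : I -> R) i :
  (forall i, 0 <= F i) -> 0 < \prod_i F i -> 0 < F i.
Proof.
move=> F0; rewrite (bigD1 i) //= => h; rewrite lt_def F0 andbT.
apply/negP => /eqP Fi; by rewrite Fi mul0r ltxx in h.
Qed.

Lemma obs_eq (M n K : nat) (Y : finType) (k : option 'I_K) (y : outblock M n K Y) a :
  (observe k y == a) = [forall j, [forall t, y j t k == a j t]].
Proof.
apply/idP/idP => [/eqP <-|/forallP h].
  by apply/forallP => j; apply/forallP => t; rewrite /observe !ffunE.
apply/eqP/ffunP => j; apply/ffunP => t; rewrite !ffunE; exact/eqP/(forallP (h j) t).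
Qed.

End Gen4.
Section Gen5.
Variable R : realType.

Lemma condHn_expect (T U V : finType) (Q : T -> R) (f : T -> U) (g : T -> V) :
  (forall t, 0 <= Q t) ->
  Hn (push Q f) - Hn (push Q g) = - \sum_t Q t * ln (push Q f (f t) / push Q g (g t)).
Proof.
move=> Q0; rewrite !Hn_push opprK.
suff -> : \sum_t Q t * ln (push Q f (f t) / push Q g (g t)) =
  \sum_t Q t * ln (push Q f (f t)) - \sum_t Q t * ln (push Q g (g t)) by lra.
rewrite -sumrB; under [X in _ = X]eq_bigr do rewrite -mulrBr.
apply: eq_supp => // t Qt; rewrite ln_div ?posrE //; exact: push_gt0.
Qed.

Lemma sum3 (A B C : finType) (F : A * B * C -> R) :
  \sum_t F t = \sum_a \sum_b \sum_c F (a, b, c).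
Proof.
symmetry; rewrite pair_bigA /= pair_bigA /=.
by apply: eq_bigr => -[[a b] c].
Qed.

Variables (X Y : finType).

Lemma push_XZ (q : X * Y * Y -> R) a c :
  push q (fun t => (t.1.1, t.2)) (a, c) = \sum_b q (a, b, c).
Proof.
rewrite /push (reindex_onto (fun b => (a, b, c)) (fun t => t.1.2)) /=.
  by apply: eq_bigl => b; rewrite !eqxx.
by move=> [[a' b'] c'] /eqP [-> ->].
Qed.

Lemma push_YZ (q : X * Y * Y -> R) b c :
  push q (fun t => (t.1.2, t.2)) (b, c) = \sum_a q (a, b, c).
Proof.
rewrite /push (reindex_onto (fun a => (a, b, c)) (fun t => t.1.1)) /=.
  by apply: eq_bigl => a; rewrite !eqxx.
by move=> [[a' b'] c'] /eqP [-> ->].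
Qed.

Lemma push_Z (q : X * Y * Y -> R) c :
  push q snd c = \sum_a \sum_b q (a, b, c).
Proof.
rewrite /push (reindex_onto (fun ab : X * Y => (ab.1, ab.2, c)) (fun t => t.1)) /=.
  rewrite [RHS]pair_bigA /=.
  by apply: eq_bigl => -[a b]; rewrite !eqxx.
by move=> [[a' b'] c'] /= /eqP ->.
Qed.

Lemma condMIE (q : X * Y * Y -> R) : (forall t, 0 <= q t) ->
  condMI q = (Hn (push q (fun t => (t.1.1, t.2))) + Hn (push q (fun t => (t.1.2, t.2)))
              - Hn q - Hn (push q snd)) / ln 2.
Proof.
move=> q0; rewrite /condMI.
have -> : (fun xz : X * Y => \sum_y q (xz.1, y, xz.2)) = push q (fun t => (t.1.1, t.2)).
  by apply/funext => -[a c]; rewrite push_XZ.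
have -> : (fun yz : Y * Y => \sum_x q (x, yz.1, yz.2)) = push q (fun t => (t.1.2, t.2)).
  by apply/funext => -[b c]; rewrite push_YZ.
have -> : (fun z : Y => \sum_x \sum_y q (x, y, z)) = push q snd.
  by apply/funext => c; rewrite push_Z.
rewrite !entropyE //; try by move=> ?; apply: push_ge0.
by rewrite -mulrDl -!mulrBl.
Qed.

End Gen5.
Section Single.
Variable R : realType.
Variables (K : nat) (X Y : finType) (V : X -> outv K Y -> R) (i : 'I_K).

Definition V2 (a : X) (bc : Y * Y) : R :=
  \sum_(u : outv K Y | (u (Some i) == bc.1) && (u None == bc.2)) V a u.

Hypothesis V0 : forall a u, 0 <= V a u.

Lemma V2_ge0 a bc : 0 <= V2 a bc.
Proof. by apply: sumr_ge0 => u _; apply: V0. Qed.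

Lemma V2_ge a u : V a u <= V2 a (u (Some i), u None).
Proof. by rewrite /V2 (bigD1 u) ?eqxx //= lerDl sumr_ge0. Qed.

Lemma push_V2 a : push (V a) (fun u => (u (Some i), u None)) =1 V2 a.
Proof. by move=> [b c]; apply: eq_bigl => u; rewrite xpair_eqE. Qed.

Lemma V2_marg a c : \sum_b V2 a (b, c) = cmarg V None a c.
Proof.
have := push_marg2 (V a) (fun u : outv K Y => u (Some i)) (fun u => u None) c.
rewrite /cmarg /push => <-; apply: eq_bigr => b _; apply: eq_bigl => u.
by rewrite xpair_eqE.
Qed.

Lemma V2_le_cmarg a b c : V2 a (b, c) <= cmarg V None a c.
Proof. rewrite -V2_marg (bigD1 b) //= lerDl; apply: sumr_ge0 => *; exact: V2_ge0. Qed.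

Lemma sum_V_V2 a (G : Y -> Y -> R) :
  \sum_u V a u * G (u (Some i)) (u None) = \sum_b \sum_c V2 a (b, c) * G b c.
Proof.
rewrite (sum_push (V a) (fun u => (u (Some i), u None)) (fun bc => G bc.1 bc.2)).
symmetry; rewrite pair_bigA /=; apply: eq_bigr => -[b c] _.
by rewrite push_V2.
Qed.

Variable p : X -> R.
Hypothesis p0 : forall a, 0 <= p a.

Lemma joint_jE t : joint_j p V i t = p t.1.1 * V2 t.1.1 (t.1.2, t.2).
Proof. by []. Qed.

Lemma joint_j_ge0 t : 0 <= joint_j p V i t.
Proof. by rewrite joint_jE mulr_ge0 // V2_ge0. Qed.

Lemma mul_gt0_split (x y : R) : 0 <= x -> 0 <= y -> 0 < x * y -> 0 < x /\ 0 < y.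
Proof.
move=> x0 y0 xy; split; rewrite lt_def ?x0 ?y0 andbT; apply/negP => /eqP e;
by rewrite e ?mul0r ?mulr0 ltxx in xy.
Qed.

Lemma condXZ :
  Hn (joint_j p V i) - Hn (push (joint_j p V i) (fun t => (t.1.1, t.2)))
  = - \sum_t joint_j p V i t * ln (V2 t.1.1 (t.1.2, t.2) / cmarg V None t.1.1 t.2).
Proof.
rewrite Hn_push /Hn opprK.
suff -> : \sum_t joint_j p V i t * ln (V2 t.1.1 (t.1.2, t.2) / cmarg V None t.1.1 t.2) =
  \sum_t joint_j p V i t * ln (joint_j p V i t) -
  \sum_t joint_j p V i t * ln (push (joint_j p V i) (fun t => (t.1.1, t.2)) (t.1.1, t.2)) by lra.
rewrite -sumrB; under [X in _ = X]eq_bigr do rewrite -mulrBr.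
apply: eq_supp; last exact: joint_j_ge0.
move=> [[a b] c] /=; rewrite joint_jE /= => q0.
have [pa v2] := mul_gt0_split (p0 a) (V2_ge0 _ _) q0.
have cm : 0 < cmarg V None a c by apply: lt_le_trans v2 (V2_le_cmarg _ _ _).
rewrite push_XZ.
under eq_bigr do rewrite joint_jE /=.
rewrite -mulr_sumr V2_marg.
rewrite ln_div ?posrE // !lnM ?posrE //; lra.
Qed.

End Single.
Section Chan.
Variable R : realType.
Variables (M K n : nat) (X Y : finType).

Lemma sum_pair2 (A B : finType) (F : A * B -> R) :
  \sum_t F t = \sum_a \sum_b F (a, b).
Proof. by symmetry; rewrite pair_bigA; apply: eq_bigr => -[]. Qed.

Lemma push_chan (V : 'I_M -> X -> outv K Y -> R) (x : inblock M n X)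
  (Pr : 'I_M -> 'I_n -> pred (outv K Y)) :
  \sum_(y : outblock M n K Y | [forall j, [forall t, Pr j t (y j t)]]) chan_n V x y
  = \prod_j \prod_t \sum_(u | Pr j t u) V j (x j t) u.
Proof.
exact: (sum_ffun2_prod (fun j t u => V j (x j t) u) Pr).
Qed.

Lemma chan_ge0 (V : 'I_M -> X -> outv K Y -> R) (x : inblock M n X) (y : outblock M n K Y) :
  is_channel V -> 0 <= chan_n V x y.
Proof.
move=> Vc; apply: prodr_ge0 => j _; apply: prodr_ge0 => t _; exact: (Vc j (x j t)).1.
Qed.

Lemma chan_sum1 (V : 'I_M -> X -> outv K Y -> R) (x : inblock M n X) :
  is_channel V -> \sum_y chan_n V x y = 1.
Proof.
move=> Vc.
have E : \sum_y chan_n V x y =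
  \sum_(y : outblock M n K Y | [forall j, [forall t, (fun _ _ _ => true) j t (y j t)]]) chan_n V x y.
  by apply: eq_bigl => y; symmetry; apply/forallP => j; apply/forallP.
rewrite E; etransitivity; first exact: (push_chan V x (fun _ _ _ => true)).
apply: big1 => j _; apply: big1 => t _.
exact: (Vc j (x j t)).2.
Qed.

Lemma marg_push (V : 'I_M -> X -> outv K Y -> R) k (x : inblock M n X) (a : obsblock M n Y) :
  push (chan_n V x) (observe k) a = \prod_j \prod_t cmarg (V j) k (x j t) (a j t).
Proof.
rewrite /push (eq_bigl _ _ (obs_eq k ^~ a)).
exact: (push_chan V x (fun j t u => u k == a j t)).
Qed.

Lemma single_push (V : 'I_M -> X -> outv K Y -> R) (x : inblock M n X) j t0 u :
  is_channel V -> push (chan_n V x) (fun y => y j t0) u = V j (x j t0) u.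
Proof.
move=> Vc.
pose Pr j' t' := if (j' == j) && (t' == t0) then pred1 u else predT.
rewrite /push (eq_bigl (fun y : outblock M n K Y => [forall j', [forall t', Pr j' t' (y j' t')]])).
  etransitivity; first exact: (push_chan V x Pr).
  rewrite (bigD1 j) //= (bigD1 t0) //= /Pr !eqxx /= big_pred1_eq.
  rewrite big1 ?mulr1; last first.
    by move=> t' /negbTE ->; exact: (Vc j (x j t')).2.
  rewrite big1 ?mulr1 // => j' /negbTE jj; apply: big1 => t' _.
  by rewrite jj /=; exact: (Vc j' (x j' t')).2.
move=> y; apply/eqP/forallP => [e j'|h].
  apply/forallP => t'; rewrite /Pr; case: ifP => // /andP[/eqP -> /eqP ->].
  by rewrite /= e.
by have := forallP (h j) t0; rewrite /Pr !eqxx /= => /eqP.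
Qed.

Lemma single_expect (V : 'I_M -> X -> outv K Y -> R) (x : inblock M n X) j t0 (G : outv K Y -> R) :
  is_channel V -> \sum_y chan_n V x y * G (y j t0) = \sum_u V j (x j t0) u * G u.
Proof.
move=> Vc; rewrite (sum_push _ (fun y : outblock M n K Y => y j t0)).
by apply: eq_bigr => u _; rewrite single_push.
Qed.

End Chan.
Section Main.
Variable R : realType.
Variables (M K : nat) (X Y : finType) (P' : 'I_M -> X -> outv K Y -> R) (n N : nat)
  (enc : 'I_N -> inblock M n X -> R) (i : 'I_K).
Hypotheses (P'ch : is_channel P') (encp : forall w, is_pmf (enc w)) (N0 : (0 < N)%N).

Local Notation T := ('I_N * inblock M n X * outblock M n K Y)%type.

Definition Qm (t : T) : R := joint P' enc t.1.1 t.1.2 t.2.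
Definition pim (wx : 'I_N * inblock M n X) : R := N%:R^-1 * enc wx.1 wx.2.

Lemma Qm_split t : Qm t = pim t.1 * chan_n P' t.1.2 t.2.
Proof. by []. Qed.

Lemma pim_ge0 wx : 0 <= pim wx.
Proof. by rewrite /pim mulr_ge0 // ?invr_ge0 // (encp _).1. Qed.

Lemma Qm_ge0 t : 0 <= Qm t.
Proof. by rewrite Qm_split mulr_ge0 ?pim_ge0 ?chan_ge0. Qed.

Lemma pim_sum : \sum_wx pim wx = 1.
Proof.
rewrite sum_pair2 /pim; under eq_bigr do rewrite -mulr_sumr (encp _).2 mulr1.
by rewrite sumr_const card_ord -[_ *+ N]mulr_natr mulVf // pnatr_eq0 -lt0n.
Qed.

Lemma Qm_sum : \sum_t Qm t = 1.
Proof.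
rewrite sum_pair2 -pim_sum; apply: eq_bigr => wx _.
under eq_bigr do rewrite Qm_split /=.
by rewrite -mulr_sumr chan_sum1 ?mulr1.
Qed.

Lemma PX (U : finType) (h : outblock M n K Y -> U) wx u :
  push Qm (fun t => (t.1, h t.2)) (wx, u) = pim wx * push (chan_n P' wx.2) h u.
Proof.
rewrite /push (reindex_onto (fun y => (wx, y)) snd) /=; last first.
  by move=> [wx1 y] /=; rewrite xpair_eqE => /andP[/eqP -> _].
rewrite mulr_sumr; apply: eq_big => [y|y _]; first by rewrite xpair_eqE !eqxx /= andbT.
by rewrite Qm_split.
Qed.

Definition ps j t0 := push pim (fun wx => wx.2 j t0).
Definition pbar j a := n%:R^-1 * \sum_t0 ps j t0 a.
Definition qbar j := joint_j (pbar j) (P' j) i.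

Lemma pbar_ge0 j a : 0 <= pbar j a.
Proof. by rewrite /pbar mulr_ge0 ?invr_ge0 // sumr_ge0 // => t0 _; apply: push_ge0 pim_ge0. Qed.

Lemma pbar_sum j : (0 < n)%N -> \sum_a pbar j a = 1.
Proof.
move=> n0; rewrite /pbar -mulr_sumr exchange_big /=.
under eq_bigr do rewrite /ps push_sum pim_sum.
by rewrite sumr_const card_ord mulVf // pnatr_eq0 -lt0n.
Qed.

Lemma qbar_ge0 j t : 0 <= qbar j t.
Proof. apply: joint_j_ge0; [move=> *; exact: (P'ch _ _).1 | exact: pbar_ge0]. Qed.


Lemma equiv_eq (W : 'I_M -> X -> outv K Y -> R) : is_channel W ->
  (forall j x b, cmarg (P' j) None x b = cmarg (W j) None x b) ->
  equivocation W enc = (Hn (push Qm (fun t => (t.1.1, observe None t.2)))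
                        - Hn (push Qm (fun t => observe None t.2))) / ln 2.
Proof.
move=> Wc cm.
have E : (fun wz : 'I_N * obsblock M n Y =>
    \sum_x \sum_(y | observe None y == wz.2) joint W enc wz.1 x y)
    = push Qm (fun t => (t.1.1, observe None t.2)).
  apply/funext => -[w z] /=.
  pose f := fun t : T => (t.1, observe None t.2).
  pose g := fun u : 'I_N * inblock M n X * obsblock M n Y => (u.1.1, u.2).
  transitivity (push Qm (fun t => g (f t)) (w, z)); last by [].
  rewrite push_comp (reindex_onto (fun x => ((w, x), z)) (fun u => u.1.2)) /=; last first.
    by move=> [[w1 x] z1] /=; rewrite /g xpair_eqE /= => /andP[/eqP -> /eqP ->].
  apply: eq_big => [x|x _]; first by rewrite !eqxx.
  rewrite PX /=.
  have -> : \sum_(y | observe None y == z) joint W enc w x y =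
      pim (w, x) * push (chan_n W x) (observe None) z by rewrite /push mulr_sumr.
  rewrite !marg_push; congr (_ * _); apply: eq_bigr => j _; apply: eq_bigr => t _.
  by rewrite cm.
rewrite /equivocation /condEntropy E !entropyE; try (by move=> ? /=; apply: push_ge0 Qm_ge0);
  try (by move=> ? /=; apply: sumr_ge0 => ? _; apply: push_ge0 Qm_ge0).
rewrite -mulrBl; congr ((_ - Hn _) / _); apply/funext => b.
transitivity (\sum_a push Qm (fun t => (t.1.1, observe None t.2)) (a, b)).
  by apply: eq_bigr => a _; rewrite -E.
exact: (push_marg2 Qm (fun t => t.1.1) (fun t => observe None t.2)).
move=> b /=; do 3 (apply: sumr_ge0 => ? _).
by rewrite /joint !mulr_ge0 ?invr_ge0 ?(encp _).1 ?chan_ge0.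
Qed.


Lemma err_eq (W : 'I_M -> X -> outv K Y -> R) (dec : obsblock M n Y -> 'I_N) :
  (forall j x b, cmarg (P' j) (Some i) x b = cmarg (W j) (Some i) x b) ->
  err_prob W enc dec i = \sum_t Qm t * (dec (observe (Some i) t.2) != t.1.1)%:R.
Proof.
move=> cm; rewrite sum_pair2 sum_pair2 /err_prob; apply: eq_bigr => w _; apply: eq_bigr => x _.
rewrite big_mkcond /=.
transitivity (pim (w, x) * \sum_y chan_n W x y * (dec (observe (Some i) y) != w)%:R).
  rewrite mulr_sumr; apply: eq_bigr => y _; rewrite mulrA.
  by case: ifP => _; rewrite ?mulr1 ?mulr0.
under [RHS]eq_bigr do rewrite Qm_split /= -mulrA.
rewrite -mulr_sumr; congr (_ * _).
rewrite (sum_push _ (observe (Some i)) (fun a => (dec a != w)%:R)).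
rewrite (sum_push _ (observe (Some i)) (fun a => (dec a != w)%:R)).
apply: eq_bigr => a _; rewrite !marg_push; congr (_ * _).
by apply: eq_bigr => j _; apply: eq_bigr => t _; rewrite cm.
Qed.

Lemma EQ (G : 'I_M -> X -> Y -> Y -> R) : (0 < n)%N ->
  \sum_t Qm t * (\sum_j \sum_t0 G j (t.1.2 j t0) (t.2 j t0 (Some i)) (t.2 j t0 None))
  = n%:R * \sum_j \sum_abc qbar j abc * G j abc.1.1 abc.1.2 abc.2.
Proof.
move=> n0.
under eq_bigr do rewrite mulr_sumr.
rewrite exchange_big mulr_sumr; apply: eq_bigr => j _.
under eq_bigr do rewrite mulr_sumr.
rewrite exchange_big /=.
pose Phi a := \sum_u P' j a u * G j a (u (Some i)) (u None).
have E1 : forall t0, \sum_t Qm t * G j (t.1.2 j t0) (t.2 j t0 (Some i)) (t.2 j t0 None)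
    = \sum_a ps j t0 a * Phi a.
  move=> t0; rewrite sum_pair2.
  transitivity (\sum_wx pim wx * Phi (wx.2 j t0)); last first.
    exact: (sum_push pim (fun wx => wx.2 j t0) Phi).
  apply: eq_bigr => wx _; under eq_bigr do rewrite Qm_split /= -mulrA.
  rewrite -mulr_sumr; congr (_ * _).
  rewrite /Phi; exact: (@single_expect R M K n X Y P' wx.2 j t0 (fun u => G j (wx.2 j t0) (u (Some i)) (u None)) P'ch).
under eq_bigr do rewrite E1.
rewrite exchange_big /= sum3 mulr_sumr; apply: eq_bigr => a _.
transitivity (n%:R * (pbar j a * Phi a)).
  rewrite /pbar mulrA mulrA mulfV ?pnatr_eq0 -?lt0n // mul1r mulr_suml //.
congr (_ * _); rewrite /Phi (sum_V_V2 (P' j) i).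
rewrite mulr_sumr; apply: eq_bigr => b _; rewrite mulr_sumr; apply: eq_bigr => c _.
by rewrite /qbar joint_jE /= mulrA.
Qed.


Lemma pos_facts t j t0 : (0 < n)%N -> 0 < Qm t ->
  0 < P' j (t.1.2 j t0) (t.2 j t0) /\ 0 < pbar j (t.1.2 j t0).
Proof.
move=> n0; rewrite Qm_split => /(mul_gt0_split (pim_ge0 _) (chan_ge0 t.1.2 t.2 P'ch)) [pi ch].
split.
  have h : 0 < \prod_t' P' j (t.1.2 j t') (t.2 j t').
    apply: (prod_gt0_each j) ch => j'; apply: prodr_ge0 => t' _; exact: (P'ch _ _).1.
  by apply: (prod_gt0_each t0) h => t'; exact: (P'ch _ _).1.
rewrite /pbar mulr_gt0 ?invr_gt0 ?ltr0n //.
apply: (lt_le_trans (y := ps j t0 (t.1.2 j t0))).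
  exact: (@push_gt0 R _ _ pim (fun wx : 'I_N * inblock M n X => wx.2 j t0) t.1 pim_ge0 pi).
rewrite (bigD1 t0) //= lerDl; apply: sumr_ge0 => *; apply: push_ge0 pim_ge0.
Qed.

Lemma qbar_pos t j t0 : (0 < n)%N -> 0 < Qm t ->
  0 < qbar j (t.1.2 j t0, t.2 j t0 (Some i), t.2 j t0 None).
Proof.
move=> n0 Qt; have [h1 h2] := pos_facts j t0 n0 Qt.
rewrite /qbar joint_jE /= mulr_gt0 //.
by apply: lt_le_trans h1 _; apply: V2_ge => *; exact: (P'ch _ _).1.
Qed.

Lemma push_YZ_chan (x : inblock M n X) (a c : obsblock M n Y) :
  push (chan_n P' x) (fun y => (observe (Some i) y, observe None y)) (a, c)
  = \prod_j \prod_t V2 (P' j) i (x j t) (a j t, c j t).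
Proof.
rewrite /push (eq_bigl (fun y : outblock M n K Y => [forall j, [forall t,
   (fun j t u => (u (Some i) == a j t) && (u None == c j t)) j t (y j t)]])).
  exact: (push_chan P' x (fun j t u => (u (Some i) == a j t) && (u None == c j t))).
move=> y; rewrite xpair_eqE !obs_eq /=.
apply/idP/idP => [/andP[/forallP h1 /forallP h2]|/forallP h].
  apply/forallP => j; apply/forallP => t.
  by rewrite (forallP (h1 j) t) (forallP (h2 j) t).
apply/andP; split; apply/forallP => j; apply/forallP => t;
  by have /andP[] := forallP (h j) t.
Qed.

Lemma stepD : (0 < n)%N ->
  Hn (push Qm (fun t => (t.1, (observe (Some i) t.2, observe None t.2))))
  - Hn (push Qm (fun t => (t.1, observe None t.2)))
  = n%:R * \sum_j (Hn (qbar j) - Hn (push (qbar j) (fun t => (t.1.1, t.2)))).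
Proof.
move=> n0; rewrite condHn_expect; last exact: Qm_ge0.
pose G j a b c := ln (V2 (P' j) i a (b, c) / cmarg (P' j) None a c).
transitivity (- \sum_t Qm t * (\sum_j \sum_t0 G j (t.1.2 j t0) (t.2 j t0 (Some i)) (t.2 j t0 None))).
  congr (- _); apply: eq_supp; last exact: Qm_ge0.
  move=> t Qt.
  rewrite (PX (fun y => (observe (Some i) y, observe None y))) (PX (observe None)).
  have Qt' := Qt; rewrite Qm_split in Qt'.
  have [pi _] := mul_gt0_split (pim_ge0 t.1) (chan_ge0 t.1.2 t.2 P'ch) Qt'.
  rewrite invfM mulrACA mulfV ?gt_eqF // mul1r.
  rewrite push_YZ_chan marg_push -prodf_div.
  under eq_bigr do rewrite -prodf_div.
  rewrite ln_prod; last first.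
    move=> j; apply: prodr_gt0 => t0 _.
    have [h1 _] := pos_facts j t0 n0 Qt.
    have h2 : 0 < V2 (P' j) i (t.1.2 j t0) (observe (Some i) t.2 j t0, observe None t.2 j t0).
      rewrite /observe !ffunE; apply: lt_le_trans h1 _; apply: V2_ge => *; exact: (P'ch _ _).1.
    rewrite divr_gt0 //; apply: lt_le_trans h2 _; apply: V2_le_cmarg => *; exact: (P'ch _ _).1.
  apply: eq_bigr => j _; rewrite ln_prod; last first.
    move=> t0.
    have [h1 _] := pos_facts j t0 n0 Qt.
    have h2 : 0 < V2 (P' j) i (t.1.2 j t0) (observe (Some i) t.2 j t0, observe None t.2 j t0).
      rewrite /observe !ffunE; apply: lt_le_trans h1 _; apply: V2_ge => *; exact: (P'ch _ _).1.
    rewrite divr_gt0 //; apply: lt_le_trans h2 _; apply: V2_le_cmarg => *; exact: (P'ch _ _).1.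
  by apply: eq_bigr => t0 _; rewrite /G /observe !ffunE.
rewrite EQ // -mulrN -sumrN; congr (_ * _); apply: eq_bigr => j _.
rewrite condXZ //; first by move=> *; exact: (P'ch _ _).1.
exact: pbar_ge0.
Qed.


Definition rbar j (b c : Y) : R :=
  push (qbar j) (fun t => (t.1.2, t.2)) (b, c) / push (qbar j) snd c.

Lemma rbar_ge0 j b c : 0 <= rbar j b c.
Proof. by rewrite /rbar divr_ge0 // push_ge0 // => *; apply: qbar_ge0. Qed.

Lemma rbar_sum j c : \sum_b rbar j b c <= 1.
Proof.
rewrite /rbar -mulr_suml.
rewrite (push_marg2 (qbar j) (fun t => t.1.2) snd c).
apply: divr_le1; apply: push_ge0 => *; apply: qbar_ge0.
Qed.

Lemma stepE : (0 < n)%N ->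
  Hn (push Qm (fun t => (observe (Some i) t.2, observe None t.2)))
  - Hn (push Qm (fun t => observe None t.2))
  <= n%:R * \sum_j (Hn (push (qbar j) (fun t => (t.1.2, t.2))) - Hn (push (qbar j) snd)).
Proof.
move=> n0.
pose r (y z : obsblock M n Y) := \prod_j \prod_t0 rbar j (y j t0) (z j t0).
have rpos : forall t, 0 < Qm t -> forall j t0,
    0 < rbar j (observe (Some i) t.2 j t0) (observe None t.2 j t0).
  move=> t Qt j t0; rewrite /observe !ffunE /rbar.
  have q := qbar_pos j t0 n0 Qt.
  rewrite divr_gt0 //.
    exact: (@push_gt0 R _ _ (qbar j) (fun t => (t.1.2, t.2)) _ (qbar_ge0 j) q).
  exact: (@push_gt0 R _ _ (qbar j) snd _ (qbar_ge0 j) q).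
apply: le_trans (cond_gibbs (A := fun t => observe (Some i) t.2) (B := fun t => observe None t.2)
   (r := r) Qm_ge0 Qm_sum _ _ _) _.
- move=> y z; apply: prodr_ge0 => j _; apply: prodr_ge0 => t0 _; exact: rbar_ge0.
- move=> z.
  have E : \sum_y r y z = \sum_(y : obsblock M n Y | [forall j, [forall t0,
      (fun (j : 'I_M) (t0 : 'I_n) (b : Y) => true) j t0 (y j t0)]]) r y z.
    by apply: eq_bigl => y; symmetry; apply/forallP => j; apply/forallP.
  have E2 := sum_ffun2_prod (fun j t0 b => rbar j b (z j t0)) (fun _ _ _ => true).
  rewrite /= in E2; rewrite E /r E2.
  apply: prodr_ile1 => j _; apply/andP; split.
    by apply: prodr_ge0 => t0 _; apply: sumr_ge0 => b _; exact: rbar_ge0.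
  apply: prodr_ile1 => t0 _; apply/andP; split; last exact: rbar_sum.
  by apply: sumr_ge0 => b _; exact: rbar_ge0.
- move=> t Qt; apply: prodr_gt0 => j _; apply: prodr_gt0 => t0 _; exact: rpos.
pose G j (a b c : Y) := ln (rbar j b c).
have -> : - \sum_t Qm t * ln (r (observe (Some i) t.2) (observe None t.2)) =
   - \sum_t Qm t * (\sum_j \sum_t0 ln (rbar j (t.2 j t0 (Some i)) (t.2 j t0 None))).
  congr (- _); apply: eq_supp; last exact: Qm_ge0.
  move=> t Qt; rewrite /r ln_prod; last first.
    by move=> j; apply: prodr_gt0 => t0 _; exact: rpos.
  apply: eq_bigr => j _; rewrite ln_prod; last by move=> t0; exact: rpos.
  by apply: eq_bigr => t0 _; rewrite /observe !ffunE.
rewrite (EQ (fun j (a : X) b c => ln (rbar j b c))) // -mulrN -sumrN.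
rewrite ler_pM2l ?ltr0n //; apply: ler_sum => j _.
rewrite condHn_expect; last exact: qbar_ge0.
by rewrite /rbar.
Qed.

Lemma chain (dec : obsblock M n Y -> 'I_N) th : (0 < n)%N -> 0 < th < 1 ->
  Hn (push Qm (fun t => (t.1.1, observe None t.2))) - Hn (push Qm (fun t => observe None t.2))
  <= n%:R * (\sum_j condMI (qbar j)) * ln 2
     + (- ln (1 - th) + \sum_t Qm t * (dec (observe (Some i) t.2) != t.1.1)%:R * ln (N%:R / th)).
Proof.
move=> n0 th01.
have F1 := cond_mono (fun t : T => t.1.1) (fun t => observe (Some i) t.2) (fun t => observe None t.2) Qm_ge0 Qm_sum.
have F2 := fano (fun t : T => t.1.1) (fun t => observe (Some i) t.2) dec Qm_ge0 Qm_sum th01.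
have F3 := cond_mono (fun t => observe (Some i) t.2) (fun t : T => (t.1.1, observe None t.2)) (fun t => t.1.2) Qm_ge0 Qm_sum.
have F4a : Hn (push Qm (fun t : T => (observe (Some i) t.2, ((t.1.1, observe None t.2), t.1.2))))
         = Hn (push Qm (fun t : T => (t.1, (observe (Some i) t.2, observe None t.2)))).
  apply: Hn_eq => -[[w x] y] [[w' x'] y'] /=; rewrite !xpair_eqE.
  move: (w == w') (x == x') (observe (Some i) y == observe (Some i) y') (observe None y == observe None y').
  by do 4 case.
have F4b : Hn (push Qm (fun t : T => ((t.1.1, observe None t.2), t.1.2)))
         = Hn (push Qm (fun t : T => (t.1, observe None t.2))).
  apply: Hn_eq => -[[w x] y] [[w' x'] y'] /=; rewrite !xpair_eqE.
  move: (w == w') (x == x') (observe None y == observe None y').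
  by do 3 case.
have F4c : Hn (push Qm (fun t : T => (observe (Some i) t.2, (t.1.1, observe None t.2))))
         = Hn (push Qm (fun t : T => (t.1.1, (observe (Some i) t.2, observe None t.2)))).
  apply: Hn_eq => -[[w x] y] [[w' x'] y'] /=; rewrite !xpair_eqE.
  move: (w == w') (observe (Some i) y == observe (Some i) y') (observe None y == observe None y').
  by do 3 case.
have F5 := stepD n0.
have F6 := stepE n0.
have F7 : (\sum_j condMI (qbar j)) * ln 2 =
  \sum_j (Hn (push (qbar j) (fun t => (t.1.2, t.2))) - Hn (push (qbar j) snd))
  - \sum_j (Hn (qbar j) - Hn (push (qbar j) (fun t => (t.1.1, t.2)))).
  rewrite mulr_suml -sumrB; apply: eq_bigr => j _.
  rewrite condMIE; last exact: qbar_ge0.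
  rewrite divfK; last by rewrite gt_eqF // ln_gt0 // ltr1n.
  lra.
rewrite -mulrA F7.
rewrite F4a F4b F4c in F3.
move: F1 F2 F3 F5 F6.
set a := Hn (push Qm (fun t => (t.1.1, observe None t.2))).
set b := Hn (push Qm (fun t => observe None t.2)).
set S1 := \sum_j (Hn (push (qbar j) (fun t => (t.1.2, t.2))) - Hn (push (qbar j) snd)).
set S2 := \sum_j (Hn (qbar j) - Hn (push (qbar j) (fun t => (t.1.1, t.2)))).
set FF := \sum_t _ * _ * ln _.
move=> F1 F2 F3 F5 F6.
nra.
Qed.

End Main.
Section Final.
Variable R : realType.

Lemma ln2_gt0 : 0 < ln (2 : R).
Proof. by rewrite ln_gt0 // ltr1n. Qed.

Lemma msg_bound (n : nat) (Rt : R) :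
  (0 < msg_count n Rt)%N /\
  ln ((msg_count n Rt)%:R) <= ln 2 * (1 + n%:R * Num.max Rt 0).
Proof.
set v := expR (n%:R * Rt * ln 2).
set z := Num.ceil v.
have v0 : 0 < v by apply: expR_gt0.
have zv : v <= z%:~R by apply: ceil_ge.
have z0 : 0 < z by rewrite -(ltr0z R); apply: lt_le_trans zv.
have NE : (msg_count n Rt)%:R = z%:~R :> R.
  by rewrite /msg_count -/v -/z natr_absz gtr0_norm.
have N0 : (0 < msg_count n Rt)%N by rewrite /msg_count absz_gt0 gt_eqF.
split => //.
have zlt : z%:~R < v + 1.
  have := ceilB1_lt v; rewrite -/z intrD /=; lra.
set E := expR (n%:R * Num.max Rt 0 * ln 2).
have vE : v <= E.
  rewrite /v /E ler_expR (ler_pM2r ln2_gt0); apply: ler_wpM2l => //.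
  by rewrite le_max lexx.
have E1 : 1 <= E.
  rewrite /E -[X in X <= _]expR0 ler_expR; apply: mulr_ge0; last exact: (ltW ln2_gt0).
  by apply: mulr_ge0 => //; rewrite le_max lexx orbT.
rewrite NE.
have h : z%:~R <= 2 * E by lra.
have E0 : 0 < E by apply: lt_le_trans E1.
rewrite (le_trans (_ : _ <= ln (2 * E))).
- by [].
- by rewrite ler_ln ?posrE ?mulr_gt0 // (lt_le_trans v0).
- by rewrite lnM ?posrE // /E expRK; lra.
Qed.

End Final.
Unset Implicit Arguments.

Theorem lemma1 (R : realType) (M K : nat) (X Y : finType)
  (W : 'I_M -> X -> outv K Y -> R) :
  (0 < K)%N ->
  is_channel W ->
  forall P' : 'I_M -> X -> outv K Y -> R,
    same_marginals W P' ->
    (secrecy_capacity W <=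
     ereal_sup [set bound_value P' p | p in
                  [set p : 'I_M -> X -> R | forall j, is_pmf (p j)]])%E.
Proof.
move=> K0 Wc P' [P'c cm].
apply: ge_ereal_sup => _ [Rt Ra <-].
set S := ereal_sup _.
apply/lee_addgt0Pr => g g0.
set Rp := Num.max Rt 0.
have Rp0 : 0 <= Rp by rewrite le_max lexx orbT.
have l2 := @ln2_gt0 R.
set c := g * ln 2 / 3.
have c0 : 0 < c by rewrite /c !mulr_gt0 // invr_gt0.
set th := 1 - expR (- c).
have th0 : 0 < th by rewrite /th subr_gt0 expR_lt1 oppr_lt0.
have th1 : th < 1 by rewrite /th gtrBl expR_gt0.
have lnth : - ln (1 - th) = c by rewrite /th opprB addrC subrK expRK opprK.
set L := - ln th / ln 2.
have L0 : 0 <= L by rewrite /L divr_ge0 ?(ltW l2) // oppr_ge0 ln_le0 // ltW.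
set eps := g / (3 * (2 + Rp + L)).
have D0 : 0 < 3 * (2 + Rp + L) by rewrite mulr_gt0 //; lra.
have eps0 : 0 < eps by rewrite /eps divr_gt0.
have epsE : eps * (2 + Rp + L) = g / 3.
  have D1 : 2 + Rp + L != 0 by rewrite gt_eqF //; lra.
  by rewrite /eps invfM mulrA -mulrA mulVf ?mulr1.
have [n [n0 [enc [dec [encp [errp eqp]]]]]] := Ra eps eps0.
have [N0 lnN] := msg_bound n Rt.
set N := msg_count n Rt in enc dec encp errp eqp N0 lnN.
pose p := pbar enc.
have pp : forall j, is_pmf (p j).
  by move=> j; split; [exact: pbar_ge0 | exact: pbar_sum].
have bS : (bound_value P' p <= S)%E by apply: ereal_sup_ubound; exists p.
apply: (le_trans (y := (bound_value P' p + g%:E)%E)); last exact: leeD2r.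
have -> : (Rt%:E = (Rt - g)%:E + g%:E)%E by rewrite -EFinD subrK.
rewrite leeD2rE //.
rewrite /bound_value; apply: le_bigmin => [|i _]; first exact: leey.
rewrite lee_fin.
have th01 : 0 < th < 1 by rewrite th0 th1.
have ch := chain i P'c encp N0 (dec i) n0 th01.
have eqv := equiv_eq P'c encp Wc (fun j x b => cm j None x b).
have erq := @err_eq R M K X Y P' n N enc i W (dec i) (fun j x b => cm j (Some i) x b).
move: ch; rewrite -mulr_suml -erq.
set E := Hn _ - Hn _.
set Pe := err_prob W enc (dec i) i.
set Sg := \sum_j condMI _.
rewrite -/E in eqv.
have Pe0 : 0 <= Pe.
  rewrite /Pe erq; apply: sumr_ge0 => t _; rewrite mulr_ge0 ?Qm_ge0 //.
have Pe1 : Pe <= eps := errp i.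
have lnNth : ln (N%:R / th) = ln N%:R - ln th by rewrite ln_div ?posrE ?ltr0n.
have lnNth0 : 0 <= ln (N%:R / th).
  rewrite ln_ge0 // ler_pdivlMr // mul1r; apply: le_trans (ltW th1) _; by rewrite ler1n.
have nn1 : 1 <= n%:R :> R by rewrite ler1n.
have EqE : equivocation W enc * ln 2 = E by rewrite eqv divfK // gt_eqF.
have eqp' : n%:R * (Rt - eps) <= equivocation W enc.
  have nn0 : 0 < n%:R :> R by rewrite ltr0n.
  by rewrite -(ler_pM2l nn0) mulrA mulfV ?mul1r // gt_eqF in eqp.
have LE : - ln th = L * ln 2 by rewrite /L divfK // gt_eqF.
have Pb : Pe * ln (N%:R / th) <= eps * (ln 2 * (1 + n%:R * Rp) + L * ln 2).
  apply: le_trans (ler_wpM2r lnNth0 Pe1) _; apply: ler_wpM2l; first exact: ltW.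
  rewrite lnNth -LE; rewrite -/Rp in lnN; lra.
move=> ch.
have key : n%:R * (Rt - eps) * ln 2 <= n%:R * Sg * ln 2 + c + eps * (ln 2 * (1 + n%:R * Rp) + L * ln 2).
  have h1 : n%:R * (Rt - eps) * ln 2 <= E by rewrite -EqE ler_pM2r.
  rewrite lnth in ch; lra.
have key2 : n%:R * (Rt - eps) <= n%:R * Sg + g / 3 + eps * (1 + n%:R * Rp + L).
  rewrite -(ler_pM2r l2); apply: le_trans key _.
  rewrite le_eqVlt; apply/orP; left; apply/eqP; rewrite /c; ring.
change (Rt - g <= Sg).
have h3 : g / 3 + eps * (1 + L) <= n%:R * (g / 3 + eps * (1 + L)).
  rewrite -[X in X <= _]mul1r; apply: ler_wpM2r => //.
  by apply: addr_ge0; [rewrite divr_ge0 // ltW | rewrite mulr_ge0 // ?ltW //; lra].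
set Z := Rt - eps - Sg - eps * Rp - g / 3 - eps * (1 + L).
have hZ : n%:R * Z <= 0 by rewrite /Z; lra.
have Z0 : Z <= 0 by nra.
rewrite /Z in Z0; lra.
Qed.
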